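(* (i) A $\mathbb{B}$-topological space $(X,\tau)$ is normal if and only if both topological spaces $(X,\tau[tt])$ and $(X,\tau[ff])$ are normal. (ii) $(X,\tau)$ is $T_4$ if and only if the topological space $(X,\tau[tt]\vee\tau[ff])$ is $T_0$, both $(X,\tau[tt])$ and $(X,\tau[ff])$ are $R_0$, and both $(X,\tau[tt])$ and $(X,\tau[ff])$ are normal.
   Context: $\mathbb{B}=\{0,1,tt,ff\}$ is the four-element Boolean algebra with bottom $0$, top $1$, and $tt,ff$ incomparable complements; $\neg$ its complement, $a\to b=\neg a\vee b$. A $\mathbb{B}$-topology on $X$ is $\tau\subseteq\mathbb{B}^X$ containing all constant maps and closed under arbitrary pointwise joins and finite pointwise meets; $\mu$ is closed if $\neg\mu\in\tau$; $\overline{\nu}$ is the meet of all closed sets $\ge\nu$. $\tau[b]=\{\lambda[b]:\lambda\in\tau\}$, $\lambda[b]=\{x:\lambda(x)\ge b\}$; $\tau[tt]\vee\tau[ff]$ is the topology generated by their union. $(X,\tau)$ is normal if for every open $\lambda$ and closed $\mu$ with $\mu\le\lambda$ there is an open $\nu$ with $\mu\le\nu\le\overline{\nu}\le\lambda$. Specialization $\mathbb{B}$-order: $\Omega(\tau)(x,y)=\bigwedge_{\lambda\in\tau}(\lambda(x)\to\lambda(y))$; $(X,\tau)$ is $R_0$ if $\Omega(\tau)$ is symmetric, $T_0$ if $\Omega(\tau)(x,y)=1=\Omega(\tau)(y,x)$ implies $x=y$, $T_1$ if $T_0$ and $R_0$, and $T_4$ if $T_1$ and normal. A topological space is normal if disjoint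 closed sets have disjoint open neighbourhoods (no separation assumption on points); it is $R_0$ if every open set containing a point contains the closure of that point's singleton. *)

(* Defs.v *)
From Stdlib Require Import Classical ClassicalEpsilon FunctionalExtensionality PropExtensionality.

Inductive B : Type := B0 | B1 | Btt | Bff.

Definition Ble (a b : B) : bool :=
  match a, b with
  | B0, _ => true
  | _, B1 => true
  | Btt, Btt => true
  | Bff, Bff => true
  | _, _ => false
  end.

Definition Bjoin (a b : B) : B :=
  match a, b with
  | B0, x => x
  | x, B0 => x
  | B1, _ => B1
  | _, B1 => B1
  | Btt, Btt => Btt
  | Bff, Bff => Bff
  | _, _ => B1
  end.

Definition Bmeet (a b : B) : B :=
  match a, b with
  | B1, x => x
  | x, B1 => x
  | B0, _ => B0
  | _, B0 => B0
  | Btt, Btt => Btt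
  | Bff, Bff => Bff
  | _, _ => B0
  end.

Definition Bneg (a : B) : B :=
  match a with B0 => B1 | B1 => B0 | Btt => Bff | Bff => Btt end.

Definition Bimp (a b : B) : B := Bjoin (Bneg a) b.

Definition Bsel (P : B -> Prop) (b d : B) : B :=
  if excluded_middle_informative (P b) then b else d.

Definition Bsup (P : B -> Prop) : B :=
  Bjoin (Bsel P B0 B0) (Bjoin (Bsel P B1 B0) (Bjoin (Bsel P Btt B0) (Bsel P Bff B0))).

Definition Binf (P : B -> Prop) : B :=
  Bmeet (Bsel P B0 B1) (Bmeet (Bsel P B1 B1) (Bmeet (Bsel P Btt B1) (Bsel P Bff B1))).

Definition Fle {X : Type} (f g : X -> B) : Prop := forall x, Ble (f x) (g x) = true.

Definition is_Btopology {X : Type} (tau : (X -> B) -> Prop) : Prop :=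
  (forall b : B, tau (fun _ => b)) /\
  (forall S : (X -> B) -> Prop, (forall l, S l -> tau l) ->
      tau (fun x => Bsup (fun b => exists l, S l /\ b = l x))) /\
  (forall l m, tau l -> tau m -> tau (fun x => Bmeet (l x) (m x))).

Definition Bclosed {X : Type} (tau : (X -> B) -> Prop) (mu : X -> B) : Prop :=
  tau (fun x => Bneg (mu x)).

Definition Bclosure {X : Type} (tau : (X -> B) -> Prop) (nu : X -> B) : X -> B :=
  fun x => Binf (fun b => exists mu, Bclosed tau mu /\ Fle nu mu /\ b = mu x).

Definition Bnormal {X : Type} (tau : (X -> B) -> Prop) : Prop :=
  forall lam mu, tau lam -> Bclosed tau mu -> Fle mu lam ->
    exists nu, tau nu /\ Fle mu nu /\ Fle nu (Bclosure tau nu)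
               /\ Fle (Bclosure tau nu) lam.

Definition Omega {X : Type} (tau : (X -> B) -> Prop) (x y : X) : B :=
  Binf (fun b => exists l, tau l /\ b = Bimp (l x) (l y)).

Definition BR0 {X : Type} (tau : (X -> B) -> Prop) : Prop :=
  forall x y, Omega tau x y = Omega tau y x.

Definition BT0 {X : Type} (tau : (X -> B) -> Prop) : Prop :=
  forall x y, Omega tau x y = B1 -> Omega tau y x = B1 -> x = y.

Definition BT1 {X : Type} (tau : (X -> B) -> Prop) : Prop := BT0 tau /\ BR0 tau.

Definition BT4 {X : Type} (tau : (X -> B) -> Prop) : Prop := BT1 tau /\ Bnormal tau.

Definition is_topology {X : Type} (T : (X -> Prop) -> Prop) : Prop :=
  T (fun _ => True) /\
  (forall F : (X -> Prop) -> Prop, (forall U, F U -> T U) ->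
      T (fun x => exists U, F U /\ U x)) /\
  (forall U V, T U -> T V -> T (fun x => U x /\ V x)).

(** tau[b] = { lambda[b] : lambda in tau },  lambda[b] = {x | lambda x >= b} *)
Definition cut {X : Type} (tau : (X -> B) -> Prop) (b : B) : (X -> Prop) -> Prop :=
  fun U => exists l, tau l /\ U = (fun x => Ble b (l x) = true).

Definition gen_topology {X : Type} (G : (X -> Prop) -> Prop) : (X -> Prop) -> Prop :=
  fun U => forall T, is_topology T -> (forall V, G V -> T V) -> T U.

Definition join_topology {X : Type} (T1 T2 : (X -> Prop) -> Prop) : (X -> Prop) -> Prop :=
  gen_topology (fun U => T1 U \/ T2 U).

Definition Tclosed {X : Type} (T : (X -> Prop) -> Prop) (A : X -> Prop) : Prop :=
  T (fun x => ~ A x).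

Definition Tnormal {X : Type} (T : (X -> Prop) -> Prop) : Prop :=
  forall A C, Tclosed T A -> Tclosed T C -> (forall x, A x -> C x -> False) ->
    exists U V, T U /\ T V /\ (forall x, A x -> U x) /\ (forall x, C x -> V x) /\
                (forall x, U x -> V x -> False).

Definition Tclosure {X : Type} (T : (X -> Prop) -> Prop) (A : X -> Prop) : X -> Prop :=
  fun y => forall U, T U -> U y -> exists z, A z /\ U z.

Definition TR0 {X : Type} (T : (X -> Prop) -> Prop) : Prop :=
  forall U x, T U -> U x -> forall y, Tclosure T (fun z => z = x) y -> U y.

Definition TT0 {X : Type} (T : (X -> Prop) -> Prop) : Prop :=
  forall x y, x <> y -> exists U, T U /\ ((U x /\ ~ U y) \/ (U y /\ ~ U x)).

(* Main.v *)
Require Import Defs.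
From Stdlib Require Import Classical ClassicalEpsilon FunctionalExtensionality PropExtensionality Bool Setoid.

Definition Atom (c : B) : Prop := c = Btt \/ c = Bff.
Lemma Atom_tt : Atom Btt. Proof. left; reflexivity. Qed.
Lemma Atom_ff : Atom Bff. Proof. right; reflexivity. Qed.

Lemma B_ext u v : (forall c, Atom c -> Ble c u = Ble c v) -> u = v.
Proof. intro H. pose proof (H Btt Atom_tt). pose proof (H Bff Atom_ff).
 destruct u, v; simpl in *; congruence. Qed.

Lemma Ble_atoms u v : Ble u v = true <-> (forall c, Atom c -> Ble c u = true -> Ble c v = true).
Proof. split.
 - intros H c [-> | ->]; destruct u, v; simpl in *; congruence.
 - intro H. pose proof (H Btt Atom_tt) as H1. pose proof (H Bff Atom_ff) as H2.
   destruct u, v; simpl in *; try reflexivity; try (apply H1; reflexivity); try (apply H2; reflexivity).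
Qed.

Lemma Ble_join c u v : Atom c -> Ble c (Bjoin u v) = Ble c u || Ble c v.
Proof. intros [->| ->]; destruct u, v; reflexivity. Qed.
Lemma Ble_meet c u v : Atom c -> Ble c (Bmeet u v) = Ble c u && Ble c v.
Proof. intros [->| ->]; destruct u, v; reflexivity. Qed.
Lemma Ble_neg c u : Atom c -> Ble c (Bneg u) = negb (Ble c u).
Proof. intros [->| ->]; destruct u; reflexivity. Qed.
Lemma Ble_B0 c : Atom c -> Ble c B0 = false.
Proof. intros [->| ->]; reflexivity. Qed.
Lemma Ble_B1 c : Ble c B1 = true.
Proof. destruct c; reflexivity. Qed.

Lemma Ble_sup c P : Atom c -> (Ble c (Bsup P) = true <-> exists d, P d /\ Ble c d = true).
Proof. intro Hc. unfold Bsup. rewrite !Ble_join by exact Hc. rewrite !orb_true_iff.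
 unfold Bsel. split.
 - intro H.
   destruct (excluded_middle_informative (P B0)); destruct (excluded_middle_informative (P B1));
   destruct (excluded_middle_informative (P Btt)); destruct (excluded_middle_informative (P Bff));
   rewrite ?Ble_B0 in H by exact Hc;
   repeat destruct H as [H|H]; try discriminate; match type of H with Ble c ?d = true => exists d; split; assumption end.
 - intros [d [Pd Hd]]; destruct d;
   [ destruct (excluded_middle_informative (P B0)) | destruct (excluded_middle_informative (P B1))
   | destruct (excluded_middle_informative (P Btt)) | destruct (excluded_middle_informative (P Bff))];
   try contradiction; tauto.
Qed.

Lemma Ble_inf c P : Atom c -> (Ble c (Binf P) = true <-> forall d, P d -> Ble c d = true).
Proof. intro Hc. unfold Binf.
 assert (Hm : forall u v, Ble c (Bmeet u v) = true <-> Ble c u = true /\ Ble c v = true)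
   by (intros; rewrite Ble_meet, andb_true_iff by exact Hc; tauto).
 rewrite !Hm. unfold Bsel. split.
 - intros H d Pd.
   destruct (excluded_middle_informative (P B0)); destruct (excluded_middle_informative (P B1));
   destruct (excluded_middle_informative (P Btt)); destruct (excluded_middle_informative (P Bff));
   destruct d; try contradiction; tauto.
 - intro H.
   destruct (excluded_middle_informative (P B0)); destruct (excluded_middle_informative (P B1));
   destruct (excluded_middle_informative (P Btt)); destruct (excluded_middle_informative (P Bff));
   repeat split; first [apply Ble_B1 | apply H; assumption].
Qed.

Lemma Ble_trans a b c : Ble a b = true -> Ble b c = true -> Ble a c = true.
Proof. destruct a, b, c; simpl; congruence. Qed.

Lemma set_ext {X : Type} (U V : X -> Prop) : (forall x, U x <-> V x) -> U = V.
Proof. intro H; apply functional_extensionality; intro x; apply propositional_extensionality; auto. Qed.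

Lemma tau_const {X} (tau : (X -> B) -> Prop) : is_Btopology tau -> forall b, tau (fun _ => b).
Proof. intros [H _]; exact H. Qed.

Lemma tau_meet {X} (tau : (X -> B) -> Prop) l m : is_Btopology tau -> tau l -> tau m ->
  tau (fun x => Bmeet (l x) (m x)).
Proof. intros [_ [_ H]]; apply H. Qed.

Lemma tau_join {X} (tau : (X -> B) -> Prop) l m : is_Btopology tau -> tau l -> tau m ->
  tau (fun x => Bjoin (l x) (m x)).
Proof. intros [_ [Hs _]] Hl Hm.
 specialize (Hs (fun k => k = l \/ k = m)).
 replace (fun x => Bjoin (l x) (m x)) with
   (fun x => Bsup (fun b => exists k, (k = l \/ k = m) /\ b = k x)).
 - apply Hs. intros k [->| ->]; auto.
 - apply functional_extensionality; intro x; apply B_ext; intros c Hc.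
   rewrite Ble_join by exact Hc. apply eq_iff_eq_true. rewrite Ble_sup, orb_true_iff by exact Hc.
   split.
   + intros [d [[k [[-> | ->] ->]] Hd]]; auto.
   + intros [H|H]; eexists; split; [exists l; split; [left|]; reflexivity | exact H |
                                    exists m; split; [right|]; reflexivity | exact H].
Qed.

Definition single {X : Type} (c : B) (U : X -> Prop) : X -> B :=
  fun x => if excluded_middle_informative (U x) then c else B0.

Lemma Ble_single {X} c d (U : X -> Prop) x : Atom c -> Atom d ->
  (Ble d (single c U x) = true <-> U x /\ d = c).
Proof. intros Hc Hd. unfold single. destruct (excluded_middle_informative (U x));
 destruct Hc, Hd; subst; simpl; split; intuition congruence.
Qed.

Lemma single_open {X} (tau : (X -> B) -> Prop) c U : is_Btopology tau -> Atom c ->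
  cut tau c U -> tau (single c U).
Proof. intros H Hc [l [Hl ->]].
 replace (single c (fun x => Ble c (l x) = true)) with (fun x => Bmeet (l x) c).
 - apply tau_meet; auto. apply tau_const; auto.
 - apply functional_extensionality; intro x; unfold single.
   destruct (excluded_middle_informative (Ble c (l x) = true)) as [E|E];
   destruct Hc; subst; destruct (l x); simpl in *; try reflexivity; try discriminate;
   exfalso; apply E; reflexivity.
Qed.

Lemma closed_single {X} (tau : (X -> B) -> Prop) c U : is_Btopology tau -> Atom c ->
  Tclosed (cut tau c) U -> Bclosed tau (single c U).
Proof. intros H Hc HU. unfold Bclosed.
 replace (fun x => Bneg (single c U x)) with
   (fun x => Bjoin (single c (fun x => ~ U x) x) (Bneg c)).
 - apply tau_join; auto. apply single_open; auto. apply tau_const; auto.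
 - apply functional_extensionality; intro x; unfold single.
   destruct (excluded_middle_informative (U x)); destruct (excluded_middle_informative (~ U x));
   try tauto; destruct Hc; subst; reflexivity.
Qed.

Lemma cut_topology {X} (tau : (X -> B) -> Prop) c : is_Btopology tau -> Atom c ->
  is_topology (cut tau c).
Proof. intros H Hc. split; [|split].
 - exists (fun _ => B1). split; [apply tau_const; auto|]. apply set_ext; intro; rewrite Ble_B1; tauto.
 - intros F HF.
   pose (S := fun l => tau l /\ F (fun x => Ble c (l x) = true)).
   exists (fun x => Bsup (fun b => exists l, S l /\ b = l x)). split.
   + destruct H as [_ [Hs _]]. apply Hs. intros l [Hl _]; exact Hl.
   + apply set_ext; intro x. rewrite Ble_sup by exact Hc. split.
     * intros [U [FU Ux]]. destruct (HF U FU) as [l [Hl EU]].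
       exists (l x). split; [exists l; split; [split; [exact Hl|rewrite <- EU; exact FU]|reflexivity]|].
       rewrite EU in Ux; exact Ux.
     * intros [d [[l [[Hl Fl] ->]] Hd]]. exists (fun x => Ble c (l x) = true); split; auto.
 - intros U V [l [Hl ->]] [m [Hm ->]]. exists (fun x => Bmeet (l x) (m x)). split.
   + apply tau_meet; auto.
   + apply set_ext; intro x. rewrite Ble_meet, andb_true_iff by exact Hc. tauto.
Qed.

Lemma Ble_closure {X} (tau : (X -> B) -> Prop) c nu x : Atom c ->
  (Ble c (Bclosure tau nu x) = true <-> forall mu, Bclosed tau mu -> Fle nu mu -> Ble c (mu x) = true).
Proof. intro Hc. unfold Bclosure. rewrite Ble_inf by exact Hc. split.
 - intros H mu Hmu Hle. apply H. exists mu; auto.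
 - intros H d [mu [Hmu [Hle ->]]]. apply H; auto.
Qed.

Lemma closure_ge {X} (tau : (X -> B) -> Prop) nu : Fle nu (Bclosure tau nu).
Proof. intro x. apply Ble_atoms. intros c Hc Hn. apply Ble_closure; auto.
 intros mu _ Hle. specialize (Hle x). rewrite Ble_atoms in Hle. auto.
Qed.

Lemma closure_closed {X} (tau : (X -> B) -> Prop) nu : is_Btopology tau ->
  Bclosed tau (Bclosure tau nu).
Proof. intros [_ [Hs _]]. unfold Bclosed.
 pose (S := fun l => exists mu, Bclosed tau mu /\ Fle nu mu /\ l = (fun x => Bneg (mu x))).
 replace (fun x => Bneg (Bclosure tau nu x)) with
   (fun x => Bsup (fun b => exists l, S l /\ b = l x)).
 - apply Hs. intros l [mu [Hmu [_ ->]]]. exact Hmu.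
 - apply functional_extensionality; intro x; apply B_ext; intros c Hc.
   apply eq_iff_eq_true. rewrite Ble_sup, Ble_neg, negb_true_iff by exact Hc.
   split.
   + intros [d [[l [[mu [Hmu [Hle ->]]] ->]] Hd]]. rewrite Ble_neg, negb_true_iff in Hd by exact Hc.
     destruct (Ble c (Bclosure tau nu x)) eqn:E; auto.
     rewrite Ble_closure in E by exact Hc. rewrite (E mu Hmu Hle) in Hd; discriminate.
   + intro E. apply not_true_iff_false in E. rewrite Ble_closure in E by exact Hc.
     apply not_all_ex_not in E. destruct E as [mu E].
     apply imply_to_and in E; destruct E as [Hmu E].
     apply imply_to_and in E; destruct E as [Hle E].
     exists (Bneg (mu x)). split.
     * exists (fun x => Bneg (mu x)). split; [exists mu; auto|reflexivity].
     * rewrite Ble_neg, negb_true_iff by exact Hc. apply not_true_iff_false; exact E.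
Qed.

Lemma normal_to_T {X} (tau : (X -> B) -> Prop) c : is_Btopology tau -> Atom c ->
  Bnormal tau -> Tnormal (cut tau c).
Proof. intros H Hc Hn A C HA HC Hdis.
 pose (lam := fun x => Bneg (single c C x)).
 pose (mu := single c A).
 assert (Hlam : tau lam) by (apply (closed_single tau c C); auto).
 assert (Hmu : Bclosed tau mu) by (apply closed_single; auto).
 assert (Hle : Fle mu lam).
 { intro x. apply Ble_atoms. intros d Hd Hm. unfold mu in Hm.
   apply Ble_single in Hm; auto. destruct Hm as [Ax ->].
   unfold lam. rewrite Ble_neg by exact Hd. apply negb_true_iff.
   destruct (Ble c (single c C x)) eqn:E; auto. apply Ble_single in E; auto.
   exfalso; destruct E; eauto. }
 destruct (Hn lam mu Hlam Hmu Hle) as [nu [Hnu [Hmn [Hncl Hcl]]]].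
 exists (fun x => Ble c (nu x) = true), (fun x => Ble c (Bneg (Bclosure tau nu x)) = true).
 split; [exists nu; auto|].
 split; [exists (fun x => Bneg (Bclosure tau nu x)); split; [apply closure_closed; auto|reflexivity]|].
 split; [|split].
 - intros x Ax. specialize (Hmn x). rewrite Ble_atoms in Hmn. apply Hmn; auto.
   unfold mu. apply Ble_single; auto.
 - intros x Cx. rewrite Ble_neg, negb_true_iff by exact Hc.
   destruct (Ble c (Bclosure tau nu x)) eqn:E; auto.
   specialize (Hcl x). rewrite Ble_atoms in Hcl. specialize (Hcl c Hc E).
   unfold lam in Hcl. rewrite Ble_neg, negb_true_iff in Hcl by exact Hc.
   assert (Ble c (single c C x) = true) by (apply Ble_single; auto). congruence.
 - intros x H1 H2. specialize (Hncl x). rewrite Ble_atoms in Hncl. specialize (Hncl c Hc H1).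
   rewrite Ble_neg, negb_true_iff in H2 by exact Hc. congruence.
Qed.

Lemma comp_bound {X} (tau : (X -> B) -> Prop) lam c nu (U V : X -> Prop) :
  is_Btopology tau -> Atom c -> cut tau c V ->
  (forall x, Ble c (nu x) = true -> U x) -> (forall x, Ble c (lam x) = false -> V x) ->
  (forall x, U x -> V x -> False) ->
  forall x, Ble c (Bclosure tau nu x) = true -> Ble c (lam x) = true.
Proof. intros H Hc HV HU HlV Hdis x Hx.
 destruct (Ble c (lam x)) eqn:E; auto. exfalso.
 rewrite Ble_closure in Hx by exact Hc.
 specialize (Hx (fun y => Bneg (single c V y))).
 assert (Hcl : Bclosed tau (fun y => Bneg (single c V y))).
 { unfold Bclosed. replace (fun x => Bneg (Bneg (single c V x))) with (single c V).
   - apply single_open; auto.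
   - apply functional_extensionality; intro y; destruct (single c V y); reflexivity. }
 assert (Hle : Fle nu (fun y => Bneg (single c V y))).
 { intro y. apply Ble_atoms. intros d Hd Hn. rewrite Ble_neg, negb_true_iff by exact Hd.
   destruct (Ble d (single c V y)) eqn:E2; auto.
   apply Ble_single in E2; auto. destruct E2 as [Vy ->]. exfalso; eauto. }
 specialize (Hx Hcl Hle). cbv beta in Hx. rewrite Ble_neg, negb_true_iff in Hx by exact Hc.
 assert (Ble c (single c V x) = true) by (apply Ble_single; auto). congruence.
Qed.

Lemma sep_atom {X} (tau : (X -> B) -> Prop) c lam mu : is_Btopology tau -> Atom c ->
  Tnormal (cut tau c) -> tau lam -> Bclosed tau mu -> Fle mu lam ->
  exists U V, cut tau c U /\ cut tau c V /\ (forall x, Ble c (mu x) = true -> U x) /\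
    (forall x, Ble c (lam x) = false -> V x) /\ (forall x, U x -> V x -> False).
Proof. intros H Hc Hn Hlam Hmu Hle.
 apply Hn.
 - exists (fun x => Bneg (mu x)). split; [exact Hmu|].
   apply set_ext; intro x. rewrite Ble_neg by exact Hc. destruct (Ble c (mu x)); simpl; intuition congruence.
 - exists lam. split; [exact Hlam|].
   apply set_ext; intro x. destruct (Ble c (lam x)); intuition congruence.
 - intros x H1 H2. specialize (Hle x). rewrite Ble_atoms in Hle. rewrite (Hle c Hc H1) in H2. discriminate.
Qed.

Lemma T_to_normal {X} (tau : (X -> B) -> Prop) : is_Btopology tau ->
  Tnormal (cut tau Btt) -> Tnormal (cut tau Bff) -> Bnormal tau.
Proof. intros H H1 H2 lam mu Hlam Hmu Hle.
 destruct (sep_atom tau Btt lam mu H Atom_tt H1 Hlam Hmu Hle) as [Ut [Vt [HUt [HVt [Amt [Alt Dt]]]]]].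
 destruct (sep_atom tau Bff lam mu H Atom_ff H2 Hlam Hmu Hle) as [Uf [Vf [HUf [HVf [Amf [Alf Df]]]]]].
 pose (nu := fun x => Bjoin (single Btt Ut x) (single Bff Uf x)).
 assert (Hnu : forall d x, Atom d -> Ble d (nu x) = true <-> (Ut x /\ d = Btt) \/ (Uf x /\ d = Bff)).
 { intros d x Hd. unfold nu. rewrite Ble_join, orb_true_iff by exact Hd.
   rewrite !Ble_single; auto using Atom_tt, Atom_ff. tauto. }
 exists nu. split; [|split; [|split]].
 - apply tau_join; auto; apply single_open; auto using Atom_tt, Atom_ff.
 - intro x. apply Ble_atoms. intros d Hd Hm. apply Hnu; auto.
   destruct Hd; subst; [left|right]; auto.
 - apply closure_ge.
 - intro x. apply Ble_atoms. intros d Hd Hm. destruct Hd; subst.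
   + apply (comp_bound tau lam Btt nu Ut Vt); auto using Atom_tt.
     intros y Hy. apply Hnu in Hy; auto using Atom_tt. destruct Hy as [[? _]|[_ E]]; auto; discriminate.
   + apply (comp_bound tau lam Bff nu Uf Vf); auto using Atom_ff.
     intros y Hy. apply Hnu in Hy; auto using Atom_ff. destruct Hy as [[_ E]|[? _]]; auto; discriminate.
Qed.

Definition spec {X} (tau : (X -> B) -> Prop) c (x y : X) : Prop :=
  forall U, cut tau c U -> U x -> U y.

Lemma Ble_Omega {X} (tau : (X -> B) -> Prop) c x y : Atom c ->
  (Ble c (Omega tau x y) = true <-> spec tau c x y).
Proof. intro Hc. unfold Omega. rewrite Ble_inf by exact Hc. split.
 - intros H U [l [Hl ->]] Hx. specialize (H _ (ex_intro _ l (conj Hl eq_refl))).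
   unfold Bimp in H. rewrite Ble_join, Ble_neg in H by exact Hc. rewrite Hx in H. exact H.
 - intros H d [l [Hl ->]]. unfold Bimp. rewrite Ble_join, Ble_neg by exact Hc.
   destruct (Ble c (l x)) eqn:E; simpl; auto.
   apply (H (fun z => Ble c (l z) = true)); [exists l; auto | exact E].
Qed.

Lemma Omega_eq {X} (tau : (X -> B) -> Prop) x y x' y' :
  Omega tau x y = Omega tau x' y' <-> (forall c, Atom c -> (spec tau c x y <-> spec tau c x' y')).
Proof. split.
 - intros E c Hc. rewrite <- !Ble_Omega by exact Hc. rewrite E. tauto.
 - intro H. apply B_ext; intros c Hc. apply eq_iff_eq_true. rewrite !Ble_Omega by exact Hc. auto.
Qed.

Lemma Omega_one {X} (tau : (X -> B) -> Prop) x y :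
  Omega tau x y = B1 <-> spec tau Btt x y /\ spec tau Bff x y.
Proof. split.
 - intro E. split; apply Ble_Omega; auto using Atom_tt, Atom_ff; rewrite E; reflexivity.
 - intros [H1 H2]. apply B_ext; intros c Hc. rewrite Ble_B1.
   destruct Hc; subst; apply Ble_Omega; auto using Atom_tt, Atom_ff.
Qed.

Lemma TR0_spec {X} (tau : (X -> B) -> Prop) c :
  TR0 (cut tau c) <-> (forall x y, spec tau c y x -> spec tau c x y).
Proof. unfold TR0, Tclosure. split.
 - intros H x y Hyx U HU Hx. apply (H U x HU Hx y). intros W HW Wy.
   exists x; split; auto. apply Hyx; auto.
 - intros H U x HU Hx y Hcl. apply (H x y); auto. intros W HW Wy.
   destruct (Hcl W HW Wy) as [z [-> Wz]]; auto.
Qed.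

Lemma BR0_iff {X} (tau : (X -> B) -> Prop) :
  BR0 tau <-> TR0 (cut tau Btt) /\ TR0 (cut tau Bff).
Proof. unfold BR0. split.
 - intro H. split; apply TR0_spec; intros x y Hyx;
   pose proof (proj1 (Omega_eq tau y x x y) (H y x)) as E;
   [exact (proj1 (E Btt Atom_tt) Hyx) | exact (proj1 (E Bff Atom_ff) Hyx)].
 - intros [H1 H2] x y. apply Omega_eq. intros c Hc.
   rewrite TR0_spec in H1, H2. destruct Hc; subst; split; auto.
Qed.

Lemma gen_contains {X} (G : (X -> Prop) -> Prop) U : G U -> gen_topology G U.
Proof. intros HG T _ HT; auto. Qed.

Lemma indist_top {X} (x y : X) : is_topology (fun W : X -> Prop => W x <-> W y).
Proof. split; [tauto|split].
 - intros F HF; split; intros [U [FU Ux]]; exists U; split; auto; apply (HF U FU); auto.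
 - intros U V HU HV. simpl. tauto.
Qed.

Lemma BT0_iff {X} (tau : (X -> B) -> Prop) :
  BT0 tau <-> TT0 (join_topology (cut tau Btt) (cut tau Bff)).
Proof. unfold BT0, TT0, join_topology. split.
 - intros HB x y Hne. apply NNPP; intro Hn. apply Hne, HB; apply Omega_one;
   split; intros U HU Ux; apply NNPP; intro Uy; apply Hn; exists U;
   (split; [apply gen_contains; auto | tauto]).
 - intros HT x y H1 H2. apply Omega_one in H1, H2. apply NNPP; intro Hne.
   destruct (HT x y Hne) as [U [HU Hsep]].
   assert (U x <-> U y).
   { apply (HU (fun W => W x <-> W y) (indist_top x y)).
     intros V [HV|HV]; split; intro; [apply (proj1 H1) | apply (proj1 H2) | apply (proj2 H1) | apply (proj2 H2)]; auto. }
   tauto.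
Qed.

Theorem mainTheorem18 (X : Type) (tau : (X -> B) -> Prop) :
  is_Btopology tau ->
  (Bnormal tau <-> Tnormal (cut tau Btt) /\ Tnormal (cut tau Bff)) /\
  (BT4 tau <->
     TT0 (join_topology (cut tau Btt) (cut tau Bff)) /\
     TR0 (cut tau Btt) /\ TR0 (cut tau Bff) /\
     Tnormal (cut tau Btt) /\ Tnormal (cut tau Bff)).
Proof.
 intro H.
 assert (Hi : Bnormal tau <-> Tnormal (cut tau Btt) /\ Tnormal (cut tau Bff)).
 { split.
   - intro Hn; split; apply normal_to_T; auto using Atom_tt, Atom_ff.
   - intros [H1 H2]; apply T_to_normal; auto. }
 split; [exact Hi|].
 unfold BT4, BT1.
 pose proof (BR0_iff tau). pose proof (BT0_iff tau). tauto.
Qed.
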